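(* Let $Q=[0,1]^d$, $d\ge2$, with canonical basis $(e_i)_{i=1}^d$, and let $v:\{0,1\}^d\to\mathbb{R}^d$ be given at the vertices of $Q$ such that $v_i(x+e_i)=v_i(x)$ for every $i$ and every $x\in\{0,1\}^d$ with $x_i=0$, and $v_i(x+e_i+e_j)+v_j(x+e_i+e_j)=v_i(x)+v_j(x)$ for every $i\ne j$ and every $x\in\{0,1\}^d$ with $x_i=x_j=0$. Denote also by $v$ the $d$-linear interpolation of these values on $Q$. Then $e(v)=0$ in $Q$ (so that $v$ is affine with skew-symmetric gradient). *)

(* Defs.v *)
From HB Require Import structures.
From mathcomp Require Import all_boot all_order all_algebra.
From mathcomp Require Import all_classical all_reals all_analysis.
Set Implicit Arguments. Unset Strict Implicit. Unset Printing Implicit Defensive.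
Import Order.TTheory GRing.Theory Num.Theory.
Import numFieldNormedType.Exports.
Local Open Scope ring_scope.

(* Vertices of Q = [0,1]^d are boolean vectors x : {ffun 'I_d -> bool}
   (true = coordinate 1). Points of R^d are row vectors 'rV[R]_d. *)

(* x + e_i, used only when x_i = 0 (false). *)
Definition vplus (d : nat) (x : {ffun 'I_d -> bool}) (i : 'I_d)
  : {ffun 'I_d -> bool} := [ffun k => (k == i) || x k].

Definition ebasis (R : realType) (d : nat) (j : 'I_d) : 'rV[R]_d :=
  delta_mx 0 j.

Definition interp (R : realType) (d : nat)
  (v : {ffun 'I_d -> bool} -> 'I_d -> R) (y : 'rV[R]_d) (i : 'I_d) : R :=
  \sum_(x : {ffun 'I_d -> bool})
     (\prod_(k < d) (if x k then y 0 k else 1 - y 0 k)) * v x i.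

Definition symgrad (R : realType) (d : nat)
  (v : {ffun 'I_d -> bool} -> 'I_d -> R) (y : 'rV[R]_d) : 'M[R]_d :=
  \matrix_(i < d, j < d)
    (('D_(ebasis R j) (fun z => interp v z i) y
      + 'D_(ebasis R i) (fun z => interp v z j) y) / 2).

Definition in_cube (R : realType) (d : nat) (y : 'rV[R]_d) : Prop :=
  forall k : 'I_d, 0 <= y 0 k <= 1.

(* Main.v *)
Require Import Defs.
From HB Require Import structures.
From mathcomp Require Import all_boot all_order all_algebra.
From mathcomp Require Import all_classical all_reals all_analysis.
From mathcomp Require Import ring lra.
Import Order.TTheory GRing.Theory Num.Theory.
Import numFieldNormedType.Exports.
Local Open Scope ring_scope.
Set Implicit Arguments. Unset Strict Implicit.

Lemma derive_affine (R : realType) (V : normedModType R) (f : V -> R) (a e : V) (c : R) :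
  (forall h : R, f (h *: e + a) = f a + h * c) -> 'D_e f a = c.
Proof.
move=> H; rewrite /derive; apply: lim_near_cst => //.
near=> h; rewrite /= H addrC addKr.
have hn0 : h != 0 by near: h; exact: nbhs_dnbhs_neq.
by rewrite /GRing.scale /= mulrA mulVf // mul1r.
Unshelve. all: by end_near.
Qed.

Definition Sg (R : realType) (b : bool) : R := if b then 1 else -1.

Definition cc (R : realType) (d : nat) (v : {ffun 'I_d -> bool} -> 'I_d -> R)
  (y : 'rV[R]_d) (i j : 'I_d) : R :=
  \sum_(x : {ffun 'I_d -> bool})
    Sg R (x j) * (\prod_(k < d | k != j) (if x k then y 0 k else 1 - y 0 k)) * v x i.

Lemma interp_shift (R : realType) (d : nat) (v : {ffun 'I_d -> bool} -> 'I_d -> R)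
  (y : 'rV[R]_d) (i j : 'I_d) (h : R) :
  interp v (h *: ebasis R j + y) i = interp v y i + h * cc v y i j.
Proof.
have E : forall k, (h *: ebasis R j + y) 0 k = h * (k == j)%:R + y 0 k.
  by move=> k; rewrite /ebasis !mxE eqxx /= eq_sym.
rewrite /interp /cc mulr_sumr -big_split; apply: eq_bigr => x _ /=.
under eq_bigr do rewrite E.
rewrite (bigD1 j) //= [X in _ = X * _ + _](bigD1 j) //= eqxx mulr1.
under eq_bigr => k kj do rewrite (negbTE kj) mulr0 add0r.
rewrite /Sg; case: (x j); ring.
Qed.

Definition fl (d : nat) (i : 'I_d) (x : {ffun 'I_d -> bool}) : {ffun 'I_d -> bool} :=
  [ffun k => if k == i then ~~ x i else x k].

Lemma flK (d : nat) (i : 'I_d) : involutive (fl i).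
Proof.
move=> x; apply/ffunP => k; rewrite !ffunE eqxx.
by case: eqVneq => [->|//]; rewrite negbK.
Qed.

Lemma fl_inj (d : nat) (i : 'I_d) : injective (fl i).
Proof. exact: inv_inj (@flK d i). Qed.

Lemma h1_fl (R : realType) (d : nat) (v : {ffun 'I_d -> bool} -> 'I_d -> R)
  (h1 : forall (i : 'I_d) (x : {ffun 'I_d -> bool}),
      x i = false -> v (vplus x i) i = v x i) i x :
  v (fl i x) i = v x i.
Proof.
case xi: (x i).
- have Ex : vplus (fl i x) i = x.
    apply/ffunP => k; rewrite !ffunE; case: eqVneq => [->|//]; by rewrite xi.
  by rewrite -{2}Ex h1 // !ffunE eqxx xi.
- have -> : fl i x = vplus x i.
    apply/ffunP => k; rewrite !ffunE; case: eqVneq => [->|//]; by rewrite xi.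
  by rewrite h1.
Qed.

Lemma cc_diag (R : realType) (d : nat) (v : {ffun 'I_d -> bool} -> 'I_d -> R)
  (h1 : forall (i : 'I_d) (x : {ffun 'I_d -> bool}),
      x i = false -> v (vplus x i) i = v x i) y i :
  cc v y i i = 0.
Proof.
rewrite /cc.
pose F := fun x : {ffun 'I_d -> bool} =>
  Sg R (x i) * (\prod_(k < d | k != i) (if x k then y 0 k else 1 - y 0 k)) * v x i.
rewrite -/(\sum_x F x).
have E : \sum_x F x = \sum_x F (fl i x) by apply: reindex_inj; exact: fl_inj.
have E2 : \sum_x F (fl i x) = - \sum_x F x.
  rewrite -sumrN; apply: eq_bigr => x _; rewrite /F h1_fl // !ffunE eqxx.
  have -> : \prod_(k < d | k != i) (if fl i x k then y 0 k else 1 - y 0 k)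
     = \prod_(k < d | k != i) (if x k then y 0 k else 1 - y 0 k).
    by apply: eq_bigr => k ki; rewrite ffunE (negbTE ki).
  by rewrite /Sg; case: (x i) => /=; ring.
lra.
Qed.

Definition gg (d : nat) (i j : 'I_d) (z : {ffun 'I_d -> bool}) (a b : bool)
  : {ffun 'I_d -> bool} :=
  [ffun k => if k == i then a else if k == j then b else z k].

Section Off.
Variables (R : realType) (d : nat) (v : {ffun 'I_d -> bool} -> 'I_d -> R).
Hypothesis h1 : forall (i : 'I_d) (x : {ffun 'I_d -> bool}),
      x i = false -> v (vplus x i) i = v x i.
Hypothesis h2 : forall (i j : 'I_d) (x : {ffun 'I_d -> bool}), i != j ->
      x i = false -> x j = false ->
      v (vplus (vplus x i) j) i + v (vplus (vplus x i) j) j = v x i + v x j.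
Variables (i j : 'I_d) (ij : i != j) (y : 'rV[R]_d).

Definition Wf (c : bool) (t : R) := if c then t else 1 - t.
Definition T (x : {ffun 'I_d -> bool}) :=
  Sg R (x j) * Wf (x i) (y 0 i) * v x i + Sg R (x i) * Wf (x j) (y 0 j) * v x j.

Lemma gg_i z a b : gg i j z a b i = a.
Proof. by rewrite ffunE eqxx. Qed.
Lemma gg_j z a b : gg i j z a b j = b.
Proof. by rewrite ffunE eq_sym (negbTE ij) eqxx. Qed.

Lemma orbit0 z a b :
  T (gg i j z a b) + T (gg i j z (~~ a) b) + T (gg i j z a (~~ b))
  + T (gg i j z (~~ a) (~~ b)) = 0.
Proof.
have V1 : forall b', vplus (gg i j z false b') i = gg i j z true b'.
  move=> b'; apply/ffunP => k; rewrite !ffunE; by case: eqVneq.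
have V2 : forall a', vplus (gg i j z a' false) j = gg i j z a' true.
  move=> a'; apply/ffunP => k; rewrite !ffunE; case: eqVneq => [->|//].
  by rewrite eq_sym (negbTE ij).
have A1 : forall b', v (gg i j z true b') i = v (gg i j z false b') i.
  by move=> b'; rewrite -V1 h1 // gg_i.
have A2 : forall a', v (gg i j z a' true) j = v (gg i j z a' false) j.
  by move=> a'; rewrite -V2 h1 // gg_j.
have H := h2 ij (gg_i z false false) (gg_j z false false).
rewrite V1 V2 A1 A2 in H.
have E : v (gg i j z false true) i = v (gg i j z false false) i
   + v (gg i j z false false) j - v (gg i j z true false) j by lra.
rewrite /T !gg_i !gg_j.
case: a; case: b => /=; rewrite !A1 !A2 E /Wf /Sg; ring.
Qed.

Lemma fl_gg_i x : fl i x = gg i j x (~~ x i) (x j).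
Proof.
apply/ffunP => k; rewrite !ffunE; case: ifP => // _.
by case: ifP => // /eqP ->.
Qed.
Lemma fl_gg_j x : fl j x = gg i j x (x i) (~~ x j).
Proof.
apply/ffunP => k; rewrite !ffunE; case: ifP => [/eqP ->|ki].
  by rewrite eq_sym (negbTE ij).
by case: ifP => // /eqP ->.
Qed.
Lemma fl_gg_ij x : fl i (fl j x) = gg i j x (~~ x i) (~~ x j).
Proof.
apply/ffunP => k; rewrite !ffunE (negbTE ij); case: (k == i) => //.
Qed.
Lemma gg_x x : gg i j x (x i) (x j) = x.
Proof.
apply/ffunP => k; rewrite !ffunE; case: ifP => [/eqP ->//|_].
by case: ifP => // /eqP ->.
Qed.

Lemma T_orbit x : T x + T (fl i x) + T (fl j x) + T (fl i (fl j x)) = 0.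
Proof.
by rewrite fl_gg_ij fl_gg_i fl_gg_j -{1}(gg_x x) orbit0.
Qed.

Definition Qp (x : {ffun 'I_d -> bool}) :=
  \prod_(k < d | (k != j) && (k != i)) (if x k then y 0 k else 1 - y 0 k).

Lemma Qp_i x : Qp (fl i x) = Qp x.
Proof. by apply: eq_bigr => k /andP[_ ki]; rewrite ffunE (negbTE ki). Qed.
Lemma Qp_j x : Qp (fl j x) = Qp x.
Proof. by apply: eq_bigr => k /andP[kj _]; rewrite ffunE (negbTE kj). Qed.

Lemma cc_off : cc v y i j + cc v y j i = 0.
Proof.
have -> : cc v y i j + cc v y j i = \sum_x Qp x * T x.
  rewrite /cc -big_split; apply: eq_bigr => x _ /=.
  rewrite (bigD1 i) //= [X in _ + _ * X * _ = _](bigD1 j) //=; last by rewrite eq_sym.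
  have -> : \prod_(i0 < d | (i0 != i) && (i0 != j))
      (if x i0 then y 0 i0 else 1 - y 0 i0) = Qp x.
    by apply: eq_bigl => k; rewrite andbC.
  rewrite /Qp /T /Wf; ring.
pose F := fun x => Qp x * T x.
rewrite -/(\sum_x F x).
have Ei : \sum_x F x = \sum_x F (fl i x) by apply: reindex_inj; exact: fl_inj.
have Ej : \sum_x F x = \sum_x F (fl j x) by apply: reindex_inj; exact: fl_inj.
have Eij : \sum_x F x = \sum_x F (fl i (fl j x)).
  by apply: reindex_inj => x1 x2 /fl_inj /fl_inj.
have S0 : \sum_x (F x + F (fl i x) + F (fl j x) + F (fl i (fl j x))) = 0.
  apply: big1 => x _; rewrite /F !(Qp_i, Qp_j) -!mulrDr T_orbit mulr0 //.
rewrite !big_split /= -Ei -Ej -Eij in S0.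
lra.
Qed.
End Off.

Unset Implicit Arguments.
Theorem lemmaA1 (R : realType) (d : nat) (hd : (2 <= d)%N)
  (v : {ffun 'I_d -> bool} -> 'I_d -> R)
  (h1 : forall (i : 'I_d) (x : {ffun 'I_d -> bool}),
      x i = false -> v (vplus x i) i = v x i)
  (h2 : forall (i j : 'I_d) (x : {ffun 'I_d -> bool}), i != j ->
      x i = false -> x j = false ->
      v (vplus (vplus x i) j) i + v (vplus (vplus x i) j) j = v x i + v x j) :
  forall y : 'rV[R]_d, in_cube y -> symgrad v y = 0.
Proof.
move=> y _; apply/matrixP => i j; rewrite !mxE.
have D : forall a b : 'I_d,
    'D_(ebasis R b) (fun z => interp v z a) y = cc v y a b.
  by move=> a b; apply: derive_affine => h; exact: interp_shift.
rewrite !D.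
have [<-|ij] := eqVneq i j.
  by rewrite cc_diag // addr0 mul0r.
by rewrite (cc_off h1 h2 ij) mul0r.
Qed.
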